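(* Let $G$ be a finite Frobenius group with Frobenius kernel $N$ and Frobenius complement $H$. Then $$|G|A_G(t)=\frac{1}{1-|G|t}+\left(|N|A_N(t)-\frac{1}{1-|N|t}\right)+|N|\left(|H|A_H(t)-\frac{1}{1-|H|t}\right).$$
   Context: A finite group $G$ is a Frobenius group if it has a proper non-trivial subgroup $H$ (a Frobenius complement) such that $H\cap gHg^{-1}=\{1\}$ for all $g\in G\setminus H$; the Frobenius kernel is $N=\left(G\setminus\bigcup_{g\in G}gHg^{-1}\right)\cup\{1\}$, which is a normal subgroup with $G=N\rtimes H$. For a finite group $G$ and $n\ge0$, let $\alpha_{G,n}$ be the number of orbits of $G$ acting on $G^n$ by simultaneous conjugation, and $A_G(t)=\sum_{n\ge0}\alpha_{G,n}t^n$. *)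

(* Defs.v *)
From mathcomp Require Import all_boot all_algebra all_fingroup all_solvable frobenius.
Set Implicit Arguments. Unset Strict Implicit. Unset Printing Implicit Defensive.
Local Open Scope group_scope.

Section Defs.
Variable gT : finGroupType.

Definition tuples_in (A : {set gT}) (n : nat) : {set {ffun 'I_n -> gT}} :=
  [set t : {ffun 'I_n -> gT} | [forall i, t i \in A]].

Definition conj_tuple n (t : {ffun 'I_n -> gT}) (g : gT) : {ffun 'I_n -> gT} :=
  [ffun i => t i ^ g].

Definition alpha (A : {set gT}) (n : nat) : nat :=
  #| [set [set conj_tuple t g | g in A] | t in tuples_in A n] |.

(* The Frobenius kernel as defined in the paper:
   (G \ union of conjugates of H) union {1} *)
Definition frob_kernel (G H : {set gT}) : {set gT} :=
  (G :\: \bigcup_(g in G) (H :^ g)) :|: [set 1].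
End Defs.

(* Main.v *)
Require Import Defs.
From mathcomp Require Import all_boot all_algebra all_fingroup all_solvable frobenius.
From mathcomp Require Import vcharacter ring.
Set Implicit Arguments. Unset Strict Implicit. Unset Printing Implicit Defensive.
Local Open Scope group_scope.

Section Burn.
Variables (gT : finGroupType) (n : nat).

Lemma conj_tuple1 (t : {ffun 'I_n -> gT}) : conj_tuple t 1 = t.
Proof. by apply/ffunP=> i; rewrite ffunE conjg1. Qed.

Lemma conj_tupleM (t : {ffun 'I_n -> gT}) a b :
  conj_tuple t (a * b) = conj_tuple (conj_tuple t a) b.
Proof. by apply/ffunP=> i; rewrite !ffunE conjgM. Qed.

Definition ctact := TotalAction conj_tuple1 conj_tupleM.

Lemma conjg_eq_cent1 (x y : gT) : (x ^ y == x) = (x \in 'C[y]).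
Proof.
rewrite cent1E conjgE; apply/eqP/eqP => h.
  by rewrite -{2}h mulKVg.
by rewrite h mulKg.
Qed.

Lemma burnside (A : {group gT}) :
  (#|A| * alpha A n = \sum_(x in A) #|'C_A[x]| ^ n)%N.
Proof.
have acts : [acts A, on tuples_in A n | ctact].
  apply/subsetP=> a Aa; rewrite !inE /=; apply/subsetP=> t; rewrite !inE.
  move=> /forallP Ht; apply/forallP=> i /=; rewrite ffunE groupJ //.
have := Frobenius_Cauchy acts; rewrite mulnC => <-.
apply: eq_bigr => a Aa.
rewrite -[in RHS](card_ord n) -card_ffun_on; apply: eq_card => t.
rewrite !inE; apply/andP/idP => [[/forallP Ht Fix]|Ht].
  move: Fix; rewrite sub1set inE /= => /eqP Fix.
  apply/ffun_onP => i; have := Ht i.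
  have -> : (t i \in 'C_A[a]) = (t i \in A) && (t i ^ a == t i).
    by rewrite inE conjg_eq_cent1.
  have Fi : t i ^ a = t i.
    by have := congr1 (fun f : {ffun 'I_n -> gT} => f i) Fix; rewrite /= ffunE.
  by move=> ->; rewrite Fi eqxx.
split.
  by apply/forallP=> i; have := ffun_onP Ht i; rewrite inE => /andP[].
rewrite sub1set inE /=; apply/eqP/ffunP => i; rewrite ffunE.
by apply/eqP; rewrite conjg_eq_cent1; have := ffun_onP Ht i; rewrite inE => /andP[].
Qed.
End Burn.
Section Frob.
Variables (gT : finGroupType) (G H K : {group gT}) (n : nat).
Hypothesis frobG : [Frobenius G = K ><| H].

Let f x := (#|'C_G[x]| ^ n)%N.

Lemma ctx : [/\ K <| G, H \subset G, K * H = G, H \subset 'N(K) & K :&: H = 1].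
Proof. by have [defG _ _ _ _] := Frobenius_context frobG; apply: sdprod_context. Qed.

Lemma tiHG : normedTI H^# G H.
Proof. by case/andP: (FrobeniusWcompl frobG). Qed.

Lemma frob_kerE : frob_kernel G H = K.
Proof.
have [/andP[sKG nKG] sHG _ _ tiKH] := ctx.
apply/setP => x; rewrite /frob_kernel !inE.
have [->|nx1] := eqVneq x 1; first by rewrite orbT group1.
rewrite orbF; case xK: (x \in K).
  rewrite (subsetP sKG) // andbT; apply/bigcupP => [[g Gg]].
  rewrite mem_conjg => xH.
  have xgK : x ^ g^-1 \in K by rewrite memJ_norm // (subsetP nKG) // groupV.
  have : x ^ g^-1 \in K :&: H by rewrite inE xgK.
  by rewrite tiKH inE conjg_eq1 (negPf nx1).
case xG: (x \in G); last by rewrite andbF.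
rewrite andbT; apply/negbTE; rewrite negbK.
have xC : x \in cover (gval K |: (H^# :^: K)).
  by rewrite (cover_partition (Frobenius_partition frobG)).
case/bigcupP: xC => B; rewrite in_setU1 => /predU1P[-> | ]; first by rewrite xK.
case/imsetP => k Kk -> xB.
apply/bigcupP; exists k; first by rewrite (subsetP sKG).
by move: xB; rewrite conjD1g inE => /andP[].
Qed.

Lemma cardC1 (A : {group gT}) : 'C_A[1] = A.
Proof. by rewrite cent11T setIT. Qed.

Lemma sumK : (\sum_(x in K) f x = #|G| ^ n + \sum_(x in K^#) #|'C_K[x]| ^ n)%N.
Proof.
have [/andP[sKG nKG] sHG _ _ tiKH] := ctx.
rewrite (big_setD1 1) //= /f cardC1; congr (_ + _)%N.
apply: eq_bigr => x xK; suff -> : 'C_G[x] = 'C_K[x] by [].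
apply/eqP; rewrite eqEsubset (setSI _ sKG) andbT subsetI subsetIr andbT.
exact: (Frobenius_cent1_ker frobG xK).
Qed.

Lemma sumB k : k \in K ->
  (\sum_(x in H^# :^ k) f x = \sum_(y in H^#) #|'C_H[y]| ^ n)%N.
Proof.
have [/andP[sKG nKG] sHG _ _ tiKH] := ctx.
move=> Kk; have Gk := subsetP sKG k Kk.
rewrite /conjugate big_imset /=; last by move=> y z _ _; apply: conjg_inj.
apply: eq_bigr => y yH; rewrite /f; congr (_ ^ _)%N.
rewrite cent1J -{1}(conjGid Gk) -conjIg cardJg.
suff -> : 'C_G[y] = 'C_H[y] by [].
apply/eqP; rewrite eqEsubset (setSI _ sHG) andbT subsetI subsetIr andbT.
exact: (cent1_normedTI tiHG yH).
Qed.

Lemma card_conjK : #|H^# :^: K| = #|K|.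
Proof.
have [/andP[sKG nKG] sHG _ _ tiKH] := ctx.
have [_ _ /eqP defN] := and3P tiHG.
rewrite card_conjugates.
have -> : 'N_K(H^#) = 1.
  apply/trivgP; rewrite -tiKH subsetI subsetIl /=.
  by apply: subset_trans (setSI _ sKG) _; rewrite defN.
by rewrite indexg1.
Qed.

Lemma sumG : (\sum_(x in G) f x =
   #|G| ^ n + \sum_(x in K^#) #|'C_K[x]| ^ n
   + #|K| * \sum_(y in H^#) #|'C_H[y]| ^ n)%N.
Proof.
have part := Frobenius_partition frobG.
have [_ tiP _] := and3P part.
rewrite -{1}(cover_partition part) big_trivIset // big_setU1 /=; last first.
  apply/imsetP => [[k Kk defK]].
  have : (1 : gT) \in (gval K) by rewrite group1.
  by rewrite defK conjD1g !inE eqxx.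
rewrite sumK; congr (_ + _)%N.
rewrite -card_conjK -sum_nat_const.
apply: eq_bigr => B /imsetP[k Kk ->]; exact: sumB.
Qed.
End Frob.

Theorem theorem9p2 (gT : finGroupType) (G H : {group gT}) :
  [Frobenius G with complement H]%g ->
  let N := frob_kernel G H in
  forall n : nat,
    ((#|G| * alpha G n)%N%:Z =
      (#|G| ^ n)%N%:Z
      + ((#|N| * alpha N n)%N%:Z - (#|N| ^ n)%N%:Z)
      + (#|N|)%:Z * ((#|H| * alpha H n)%N%:Z - (#|H| ^ n)%N%:Z))%R.
Proof.
move=> frobG N n.
have [K frobK] := Frobenius_kernel_exists frobG.
rewrite /N (frob_kerE frobK) (burnside n G) (burnside n K) (burnside n H).
rewrite (sumG n frobK).
rewrite (big_setD1 1 (group1 K)) (big_setD1 1 (group1 H)) /= !cardC1.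
rewrite !PoszD !PoszM.
ring.
Qed.
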